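(* Let $\mathcal{D}(\rho)=p_0\rho+p_1X\rho X+p_2Y\rho Y+p_3Z\rho Z$ and $\mathcal{E}(\rho)=q_0\rho+q_1X\rho X+q_2Y\rho Y+q_3Z\rho Z$ be arbitrary single-qubit Pauli channels. The entanglement-assisted quantum communication capacity over a quantum trajectory is $$Q_{\text{E,Q}}=\frac{C_{\text{E,Q}}}{2}=1+\frac12\Big[H(\alpha)+A_0\log_2A_0+\sum_{k=1}^3A_k^+\log_2A_k^++\sum_{k=1}^3A_k^-\log_2A_k^-\Big],$$ where $A_0=p_0q_0+p_1q_1+p_2q_2+p_3q_3$, $A_1^+=p_0q_1+p_1q_0$, $A_2^+=p_0q_2+p_2q_0$, $A_3^+=p_0q_3+p_3q_0$, $A_1^-=p_2q_3+p_3q_2$, $A_2^-=p_3q_1+p_1q_3$, $A_3^-=p_1q_2+p_2q_1$, $\alpha=A_0+A_1^++A_2^++A_3^+$, and $H(\alpha)=-\alpha\log_2\alpha-(1-\alpha)\log_2(1-\alpha)$.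
   Context: $X,Y,Z$ are Pauli matrices, $\sigma_0=I,\sigma_1=X,\sigma_2=Y,\sigma_3=Z$; $(p_i),(q_i)$ are probability vectors; $|\pm\rangle=(|0\rangle\pm|1\rangle)/\sqrt2$; $0\log_20=0$. For a Pauli channel $\mathcal{N}(\rho)=\sum_ir_i\sigma_i\rho\sigma_i$, the entanglement-assisted classical capacity (superdense coding, pre-shared EPR pair, equiprobable inputs) is $C_E(\mathcal{N})=2+\sum_ir_i\log_2r_i$, and the entanglement-assisted quantum capacity is taken, via the superdense coding/teleportation trade-off, to be $Q_E=C_E/2$. Quantum trajectory: with $D_i=\sqrt{p_i}\sigma_i$, $E_j=\sqrt{q_j}\sigma_j$, the switched channel on data $\rho$ and control $\omega=|+\rangle\langle+|$ is $\sum_{i,j}W_{i,j}(\rho\otimes\omega)W_{i,j}^\dagger$ with $W_{i,j}=E_jD_i\otimes|0\rangle\langle0|+D_iE_j\otimes|1\rangle\langle1|$. Its output has the form $p_+\mathcal{S}_+(\rho)\otimes|+\rangle\langle+|+p_-\mathcal{S}_-(\rho)\otimes|-\rangle\langle-|$ (commuting Kraus pairs go to the $|+\rangle$ branch, anticommuting pairs to the $|-\rangle$ branch), with $\mathcal{S}_\pm$ normalized Pauli channels; $C_{\text{E,Q}}=p_+C_E(\mathcal{S}_+)+p_-C_E(\mathcal{S}_-)$ (a zero-probability branch contributes zero) and $Q_{\text{E,Q}}$ is the corresponding quantum capacity. *)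

(* Defs.v *)
From HB Require Import structures.
From mathcomp Require Import all_boot all_order all_algebra all_field.
From mathcomp Require Import boolp reals exp.
Set Implicit Arguments. Unset Strict Implicit. Unset Printing Implicit Defensive.
Import Order.TTheory GRing.Theory Num.Theory.
Local Open Scope ring_scope.

Definition pauliX : 'M[algC]_2 := \matrix_(a < 2, b < 2) (if a == b then 0 else 1).
Definition pauliY : 'M[algC]_2 :=
  \matrix_(a < 2, b < 2)
    (if a == b then 0 else if (a : nat) == 0%N then - 'i else 'i).
Definition pauliZ : 'M[algC]_2 :=
  \matrix_(a < 2, b < 2) (if a == b then (if (a : nat) == 0%N then 1 else -1) else 0).
Definition pauli (k : 'I_4) : 'M[algC]_2 :=
  match val k with
  | 0%N => 1%:M | 1%N => pauliX | 2%N => pauliY | _ => pauliZ end.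

Definition commuteb (i j : 'I_4) : bool :=
  pauli j *m pauli i == pauli i *m pauli j.

Definition prop_to (M : 'M[algC]_2) (k : 'I_4) : bool :=
  `[< exists c : algC, c != 0 /\ M = c *: pauli k >].

Section Trajectory.
Variable R : realType.

Definition log2 (x : R) : R := ln x / ln 2.
Definition xlog2 (x : R) : R := if x == 0 then 0 else x * log2 x.
Definition binH (a : R) : R := - xlog2 a - xlog2 (1 - a).

Definition prob_vec (p : 'I_4 -> R) : Prop :=
  (forall i, 0 <= p i) /\ \sum_(i < 4) p i = 1.

(* Entanglement-assisted classical capacity of the Pauli channel with weights r *)
Definition CE (r : 'I_4 -> R) : R := 2 + \sum_(k < 4) xlog2 (r k).

(* Branch probabilities of the switched channel: s = true is the |+> branch
   (commuting Kraus pairs), s = false the |-> branch (anticommuting pairs). *)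
Definition branch_prob (p q : 'I_4 -> R) (s : bool) : R :=
  \sum_(i < 4) \sum_(j < 4) (if commuteb i j == s then p i * q j else 0).

Definition branch_weight (p q : 'I_4 -> R) (s : bool) (k : 'I_4) : R :=
  \sum_(i < 4) \sum_(j < 4)
     (if (commuteb i j == s) && prop_to (pauli j *m pauli i) k
      then p i * q j else 0).

Definition branch_chan (p q : 'I_4 -> R) (s : bool) (k : 'I_4) : R :=
  branch_weight p q s k / branch_prob p q s.

Definition branch_contrib (p q : 'I_4 -> R) (s : bool) : R :=
  if branch_prob p q s == 0 then 0
  else branch_prob p q s * CE (branch_chan p q s).

Definition CEQ (p q : 'I_4 -> R) : R := branch_contrib p q true + branch_contrib p q false.
Definition QEQ (p q : 'I_4 -> R) : R := CEQ p q / 2.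

End Trajectory.

Definition o0 : 'I_4 := @Ordinal 4 0 isT.
Definition o1 : 'I_4 := @Ordinal 4 1 isT.
Definition o2 : 'I_4 := @Ordinal 4 2 isT.
Definition o3 : 'I_4 := @Ordinal 4 3 isT.

(* Main.v *)
Require Import Defs.
From HB Require Import structures.
From mathcomp Require Import all_boot all_order all_algebra all_field.
From mathcomp Require Import boolp reals exp.
From mathcomp Require Import ring lra.
Import Order.TTheory GRing.Theory Num.Theory.
Local Open Scope ring_scope.

Definition xo (i j : 'I_4) : 'I_4 :=
  match val i, val j with
  | 0%N, _ => j | _, 0%N => i
  | 1%N, 1%N | 2%N, 2%N | 3%N, 3%N => o0
  | 1%N, 2%N | 2%N, 1%N => o3
  | 1%N, 3%N | 3%N, 1%N => o2
  | _, _ => o1 end.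

Definition ph (i j : 'I_4) : algC :=
  match val i, val j with
  | 1%N, 2%N => - 'i | 2%N, 1%N => 'i
  | 1%N, 3%N => 'i | 3%N, 1%N => - 'i
  | 2%N, 3%N => - 'i | 3%N, 2%N => 'i
  | _, _ => 1 end.

Definition cm (i j : 'I_4) : bool :=
  [|| val i == 0%N, val j == 0%N | val i == val j].

Lemma iiE : 'i * 'i = -1 :> algC.
Proof. by rewrite -expr2 sqrCi. Qed.

Lemma mulP i j : pauli j *m pauli i = ph i j *: pauli (xo i j).
Proof.
case: i => [[|[|[|[|i]]]] Hi] //; case: j => [[|[|[|[|j]]]] Hj] //;
apply/matrixP => a b; rewrite !mxE !big_ord_recl big_ord0 !mxE;
case: a => [[|[|a]] Ha] //; case: b => [[|[|b]] Hb] //=; rewrite ?mxE /=;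
rewrite ?mul0r ?mulr0 ?mul1r ?mulr1 ?add0r ?addr0 ?mulN1r ?mulrN1 ?mulrN ?mulNr ?opprK ?iiE ?opprK //.
Qed.

Lemma xoC i j : xo i j = xo j i.
Proof.
by case: i => [[|[|[|[|i]]]] Hi] //; case: j => [[|[|[|[|j]]]] Hj] //; apply: val_inj.
Qed.

Lemma pauli_sq k : pauli k *m pauli k = 1%:M.
Proof.
rewrite mulP; case: k => [[|[|[|[|k]]]] Hk] //=; by rewrite scale1r.
Qed.

Lemma scale_eq (c d : algC) k : (c *: pauli k == d *: pauli k) = (c == d).
Proof.
apply/eqP/eqP => [H|->] //.
have := congr1 (fun M => (M *m pauli k) 0 0) H.
by rewrite /= -!scalemxAl pauli_sq !mxE /= !mulr1.
Qed.

Lemma Ni : ('i == - 'i :> algC) = false.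
Proof. by apply/negbTE; rewrite -addr_eq0 -mulr2n mulrn_eq0 /= neq0Ci. Qed.
Lemma Ni' : (- 'i == 'i :> algC) = false.
Proof. by rewrite eq_sym Ni. Qed.

Lemma commuteE i j : commuteb i j = cm i j.
Proof.
rewrite /commuteb !mulP [xo j i]xoC scale_eq.
by case: i => [[|[|[|[|i]]]] Hi] //; case: j => [[|[|[|[|j]]]] Hj] //=;
  rewrite ?eqxx ?Ni ?Ni'.
Qed.

Lemma ph_neq0 i j : ph i j != 0.
Proof.
by case: i => [[|[|[|[|i]]]] Hi] //; case: j => [[|[|[|[|j]]]] Hj] //=;
  rewrite ?oppr_eq0 ?neq0Ci ?oner_eq0.
Qed.

Definition i0 : 'I_2 := ord0.
Definition i1 : 'I_2 := @Ordinal 2 1 isT.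

Lemma xo_neq0 m k : m != k -> val (xo k m) != 0%N.
Proof.
by case: m => [[|[|[|[|m]]]] Hm] //; case: k => [[|[|[|[|k]]]] Hk] //=.
Qed.

Lemma tr0 t : val t != 0%N -> pauli t i0 i0 + pauli t i1 i1 = 0.
Proof.
case: t => [[|[|[|[|t]]]] Ht] //= _; rewrite !mxE /= ?addr0 //.
by rewrite subrr.
Qed.

Lemma propE (c : algC) m k : c != 0 -> prop_to (c *: pauli m) k = (m == k).
Proof.
move=> hc; case: (m =P k) => [<-|/eqP ne]; apply/asboolP.
  by exists c.
move=> [d [hd H]].
have := congr1 (fun M => (M *m pauli k) i0 i0 + (M *m pauli k) i1 i1) H.
rewrite /= -!scalemxAl pauli_sq mulP !mxE -!mulrDr tr0 ?xo_neq0 // !mulr0 /= ?eqxx ?mulr1.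
move/eqP; rewrite eq_sym mulf_eq0 (negbTE hd) /= -mulr2n pnatr_eq0.
by [].
Qed.
Section R.
Variable R : realType.

Lemma xlog20 : xlog2 (0 : R) = 0.
Proof. by rewrite /xlog2 eqxx. Qed.

Lemma ln2_neq0 : ln (2:R) != 0.
Proof. by apply: lt0r_neq0; apply: ln_gt0; lra. Qed.

Lemma term (P w : R) : 0 < P -> 0 <= w -> P * xlog2 (w / P) = xlog2 w - w * log2 P.
Proof.
move=> hP hw; rewrite /xlog2.
have [->|w0] := eqVneq w 0; first by rewrite mul0r eqxx mulr0 mul0r subr0.
have wP : 0 < w by rewrite lt_neqAle eq_sym w0 hw.
rewrite mulf_eq0 invr_eq0 (negbTE w0) (negbTE (lt0r_neq0 hP)) /=.
rewrite /log2 ln_div ?posrE //.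
have : P != 0 by rewrite lt0r_neq0.
move=> hP0; field; by rewrite ln2_neq0 hP0.
Qed.

Lemma contrib (P : R) (w : 'I_4 -> R) : (forall k, 0 <= w k) -> \sum_k w k = P ->
  (if P == 0 then 0 else P * CE (fun k => w k / P)) =
  2 * P + \sum_k xlog2 (w k) - xlog2 P.
Proof.
move=> hw hs.
have [P0|P0] := eqVneq P 0.
  have w0 : forall k, w k = 0.
    by move=> k; apply/eqP; move/eqP: P0; rewrite -hs psumr_eq0 // => /allP/(_ k); apply; rewrite mem_index_enum.
  rewrite P0 xlog20 big1 ?mulr0 ?addr0 ?subr0 // => k _; by rewrite w0 xlog20.
have hP : 0 < P by rewrite lt_neqAle eq_sym P0 -hs sumr_ge0.
rewrite /CE mulrDr mulr_sumr (eq_bigr _ (fun k _ => @term P (w k) hP (hw k))).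
rewrite sumrB -mulr_suml hs /xlog2 (negbTE P0) mulrC; ring.
Qed.

End R.

Lemma sum4 (R : realType) (F : 'I_4 -> R) : \sum_(i < 4) F i = F o0 + F o1 + F o2 + F o3.
Proof.
rewrite !big_ord_recl big_ord0 addr0 !addrA.
by congr (_ + _ + _ + _); congr F; apply: val_inj.
Qed.

Theorem corollary8 (R : realType) (p q : 'I_4 -> R) :
  prob_vec p -> prob_vec q ->
  let A0 := p o0 * q o0 + p o1 * q o1 + p o2 * q o2 + p o3 * q o3 in
  let A1p := p o0 * q o1 + p o1 * q o0 in
  let A2p := p o0 * q o2 + p o2 * q o0 in
  let A3p := p o0 * q o3 + p o3 * q o0 in
  let A1m := p o2 * q o3 + p o3 * q o2 in
  let A2m := p o3 * q o1 + p o1 * q o3 in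
  let A3m := p o1 * q o2 + p o2 * q o1 in
  let alpha := A0 + A1p + A2p + A3p in
  QEQ p q = CEQ p q / 2 /\
  QEQ p q = 1 + 2^-1 * (binH alpha + xlog2 A0
                         + (xlog2 A1p + xlog2 A2p + xlog2 A3p)
                         + (xlog2 A1m + xlog2 A2m + xlog2 A3m)).
Proof.
move=> [hp0 hp1] [hq0 hq1] A0 A1p A2p A3p A1m A2m A3m alpha.
split; first by [].
have bw s k : branch_weight p q s k = \sum_i \sum_j
   (if (cm i j == s) && (xo i j == k) then p i * q j else 0).
  apply: eq_bigr => i _; apply: eq_bigr => j _.
  by rewrite commuteE mulP propE ?ph_neq0.
have bp s : branch_prob p q s = \sum_i \sum_j
   (if cm i j == s then p i * q j else 0).
  by apply: eq_bigr => i _; apply: eq_bigr => j _; rewrite commuteE.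
have wge0 s k : 0 <= branch_weight p q s k.
  apply: sumr_ge0 => i _; apply: sumr_ge0 => j _.
  by case: ifP => // _; apply: mulr_ge0.
rewrite sum4 in hp1; rewrite sum4 in hq1.
have hpq : alpha + (A1m + A2m + A3m) = 1.
  transitivity ((p o0 + p o1 + p o2 + p o3) * (q o0 + q o1 + q o2 + q o3));
    last by rewrite hp1 hq1 mulr1.
  rewrite /alpha /A0 /A1p /A2p /A3p /A1m /A2m /A3m; ring.
have eT0 : branch_weight p q true o0 = A0 by rewrite bw !sum4 /= /A0; ring.
have eT1 : branch_weight p q true o1 = A1p by rewrite bw !sum4 /= /A1p; ring.
have eT2 : branch_weight p q true o2 = A2p by rewrite bw !sum4 /= /A2p; ring.
have eT3 : branch_weight p q true o3 = A3p by rewrite bw !sum4 /= /A3p; ring.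
have eF0 : branch_weight p q false o0 = 0 by rewrite bw !sum4 /=; ring.
have eF1 : branch_weight p q false o1 = A1m by rewrite bw !sum4 /= /A1m; ring.
have eF2 : branch_weight p q false o2 = A2m by rewrite bw !sum4 /= /A2m; ring.
have eF3 : branch_weight p q false o3 = A3m by rewrite bw !sum4 /= /A3m; ring.
have pT : branch_prob p q true = alpha
  by rewrite bp !sum4 /= /alpha /A0 /A1p /A2p /A3p; ring.
have pF : branch_prob p q false = A1m + A2m + A3m
  by rewrite bp !sum4 /= /A1m /A2m /A3m; ring.
rewrite /QEQ /CEQ /branch_contrib /branch_chan.
rewrite (@contrib R _ _ (wge0 true)); last by rewrite sum4 eT0 eT1 eT2 eT3 pT.
rewrite (@contrib R _ _ (wge0 false)); last by rewrite sum4 eF0 eF1 eF2 eF3 pF; ring.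
rewrite !sum4 eT0 eT1 eT2 eT3 eF0 eF1 eF2 eF3 pT pF xlog20 /binH.
have -> : 1 - alpha = A1m + A2m + A3m by rewrite -hpq; ring.
clearbody A0 A1p A2p A3p A1m A2m A3m alpha.
lra.
Qed.
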